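(* Let $\mathcal{A}$ be an additive category and $\Phi\colon\mathcal{A}\to\mathcal{A}$ an automorphism of additive categories. (1) If $\mathcal{A}$ is Noetherian, then $\mathcal{A}_\Phi[t]$, $\mathcal{A}_\Phi[t^{-1}]$ and $\mathcal{A}_\Phi[t,t^{-1}]$ are Noetherian. (2) If $\mathcal{A}_\Phi[t]$ is Noetherian, then $\mathcal{A}_\Phi[t,t^{-1}]$ is Noetherian.
   Context: $\mathcal{A}_\Phi[t,t^{-1}]$ has the objects of $\mathcal{A}$; morphisms $A\to B$ are finite formal sums $\sum_{i\in\mathbb{Z}}f_it^i$ with $f_i\colon\Phi^i(A)\to B$ in $\mathcal{A}$, with composition $(\sum_jg_jt^j)\circ(\sum_if_it^i)=\sum_k(\sum_{i+j=k}g_j\circ\Phi^j(f_i))t^k$. $\mathcal{A}_\Phi[t]$ and $\mathcal{A}_\Phi[t^{-1}]$ are the subcategories with the same objects whose morphisms satisfy $f_i=0$ for $i<0$, respectively $f_i=0$ for $i>0$. For an additive category $\mathcal{B}$, a $\mathbb{Z}\mathcal{B}$-module is an additive contravariant functor $\mathcal{B}\to$ abelian groups, finitely generated if a quotient of a finite direct sum of representables $\mathrm{mor}_{\mathcal{B}}(?,B)$; $\mathcal{B}$ is Noetherian if every submodule of a finitely generated $\mathbb{Z}\mathcal{B}$-module is finitely generated. *)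

(* Defs.v *)
From HB Require Import structures.
From mathcomp Require Import all_boot all_algebra.
From mathcomp Require Import zify.
From Stdlib Require Import ClassicalEpsilon.
Set Implicit Arguments. Unset Strict Implicit. Unset Printing Implicit Defensive.
Import GRing.Theory Num.Theory.
Local Open Scope ring_scope.

Record abgroup := AbGroup {
  ag_car :> Type;
  ag_add : ag_car -> ag_car -> ag_car;
  ag_zero : ag_car;
  ag_opp : ag_car -> ag_car;
  ag_addA : associative ag_add;
  ag_addC : commutative ag_add;
  ag_add0 : left_id ag_zero ag_add;
  ag_addN : left_inverse ag_zero ag_opp ag_add }.
Arguments ag_add {_} _ _.
Arguments ag_zero {_}.
Arguments ag_opp {_} _.

Record precat_data := PreCatData {
  Obj : Type;
  Hom : Obj -> Obj -> Type;
  comp : forall X Y Z : Obj, Hom Y Z -> Hom X Y -> Hom X Z;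
  idm : forall X : Obj, Hom X X;
  hadd : forall X Y : Obj, Hom X Y -> Hom X Y -> Hom X Y;
  hzero : forall X Y : Obj, Hom X Y;
  hopp : forall X Y : Obj, Hom X Y -> Hom X Y }.
Arguments Hom {_} _ _.
Arguments comp {_ X Y Z} _ _.
Arguments idm {_} X.
Arguments hadd {_ X Y} _ _.
Arguments hzero {_ X Y}.
Arguments hopp {_ X Y} _.

Definition preadditive (C : precat_data) : Prop :=
  [/\ forall X Y : Obj C,
        [/\ associative (@hadd C X Y), commutative (@hadd C X Y),
            left_id (@hzero C X Y) (@hadd C X Y)
          & left_inverse (@hzero C X Y) (@hopp C X Y) (@hadd C X Y)],
      forall (W X Y Z : Obj C) (h : Hom Y Z) (g : Hom X Y) (f : Hom W X),
        comp h (comp g f) = comp (comp h g) f,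
      forall (X Y : Obj C) (f : Hom X Y), comp (idm Y) f = f /\ comp f (idm X) = f,
      forall (X Y Z : Obj C) (g1 g2 : Hom Y Z) (f : Hom X Y),
        comp (hadd g1 g2) f = hadd (comp g1 f) (comp g2 f)
    & forall (X Y Z : Obj C) (g : Hom Y Z) (f1 f2 : Hom X Y),
        comp g (hadd f1 f2) = hadd (comp g f1) (comp g f2)].

Definition is_zero_object (C : precat_data) (Z : Obj C) : Prop :=
  (forall (X : Obj C) (f : Hom Z X), f = hzero) /\
  (forall (X : Obj C) (f : Hom X Z), f = hzero).

Definition is_biproduct (C : precat_data) (X Y P : Obj C)
  (i1 : Hom X P) (i2 : Hom Y P) (p1 : Hom P X) (p2 : Hom P Y) : Prop :=
  [/\ comp p1 i1 = idm X, comp p2 i2 = idm Y, comp p1 i2 = hzero,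
      comp p2 i1 = hzero & hadd (comp i1 p1) (comp i2 p2) = idm P].

Definition additive_cat (C : precat_data) : Prop :=
  [/\ preadditive C,
      exists Z : Obj C, is_zero_object Z
    & forall X Y : Obj C, exists (P : Obj C) (i1 : Hom X P) (i2 : Hom Y P)
        (p1 : Hom P X) (p2 : Hom P Y), is_biproduct i1 i2 p1 p2].

(* Automorphisms: a functor (F0,F1) together with its inverse (G0,G1). *)
Record autom_data (C : precat_data) := AutomData {
  F0 : Obj C -> Obj C;
  G0 : Obj C -> Obj C;
  F1 : forall X Y : Obj C, Hom X Y -> Hom (F0 X) (F0 Y);
  G1 : forall X Y : Obj C, Hom X Y -> Hom (G0 X) (G0 Y);
  FG : forall X, F0 (G0 X) = X;
  GF : forall X, G0 (F0 X) = X }.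
Arguments F1 {_} _ {X Y} _.
Arguments G1 {_} _ {X Y} _.

Definition castHom (C : precat_data) (X X' Y Y' : Obj C)
  (e1 : X = X') (e2 : Y = Y') (f : Hom X Y) : Hom X' Y' :=
  match e1 in _ = X1, e2 in _ = Y1 return Hom X1 Y1 with
  | erefl, erefl => f end.

Definition castL (C : precat_data) (X X' Y : Obj C) (e : X = X')
  (f : Hom X Y) : Hom X' Y :=
  match e in _ = X1 return Hom X1 Y with erefl => f end.

Definition is_automorphism (C : precat_data) (P : autom_data C) : Prop :=
  [/\ forall (X Y Z : Obj C) (g : Hom Y Z) (f : Hom X Y),
        F1 P (comp g f) = comp (F1 P g) (F1 P f),
      forall X : Obj C, F1 P (idm X) = idm (F0 P X),
      forall (X Y : Obj C) (f g : Hom X Y), F1 P (hadd f g) = hadd (F1 P f) (F1 P g),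
      forall (X Y : Obj C) (f : Hom X Y), castHom (GF P X) (GF P Y) (G1 P (F1 P f)) = f
    & forall (X Y : Obj C) (f : Hom X Y), castHom (FG P X) (FG P Y) (F1 P (G1 P f)) = f].

Section Powers.
Variables (C : precat_data) (P : autom_data C).

Definition phi (j : int) (X : Obj C) : Obj C :=
  match j with Posz n => iter n (F0 P) X | Negz n => iter n.+1 (G0 P) X end.

Fixpoint itF1 (n : nat) (X Y : Obj C) (f : Hom X Y) :
  Hom (iter n (F0 P) X) (iter n (F0 P) Y) :=
  match n as n0 return Hom (iter n0 (F0 P) X) (iter n0 (F0 P) Y) with
  | 0 => f | n'.+1 => F1 P (itF1 n' f) end.

Fixpoint itG1 (n : nat) (X Y : Obj C) (f : Hom X Y) :
  Hom (iter n (G0 P) X) (iter n (G0 P) Y) :=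
  match n as n0 return Hom (iter n0 (G0 P) X) (iter n0 (G0 P) Y) with
  | 0 => f | n'.+1 => G1 P (itG1 n' f) end.

Definition phiM (j : int) (X Y : Obj C) (f : Hom X Y) : Hom (phi j X) (phi j Y) :=
  match j as j0 return Hom (phi j0 X) (phi j0 Y) with
  | Posz n => itF1 n f | Negz n => itG1 n.+1 f end.

Lemma phiS (k : int) X : phi (k + 1) X = F0 P (phi k X).
Proof.
case: k => [n|[|n]].
- by have -> : (Posz n + 1 = Posz n.+1) by lia.
- by rewrite /= FG.
- have -> : (Negz n.+1 + 1 = Negz n)%R by rewrite !NegzE; lia.
  by rewrite [in RHS]/= FG.
Qed.

Lemma phiP (k : int) X : phi (k - 1) X = G0 P (phi k X).
Proof.
by rewrite -{2}(subrK 1 k) phiS GF.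
Qed.

Lemma phi_add (i j : int) X : phi j (phi i X) = phi (i + j) X.
Proof.
case: j => [m|m].
- elim: m => [|m IH]; first by rewrite addr0.
  have -> : phi (Posz m.+1) (phi i X) = F0 P (phi m (phi i X)) by [].
  rewrite IH -phiS.
  by congr phi; lia.
- elim: m => [|m IH]; first by rewrite [LHS]/= -phiP; congr phi; lia.
  have -> : phi (Negz m.+1) (phi i X) = G0 P (phi (Negz m) (phi i X)) by [].
  rewrite IH -phiP.
  by congr phi; rewrite !NegzE; lia.
Qed.

Lemma phi_comp (i k : int) X : phi (k - i) (phi i X) = phi k X.
Proof. by rewrite phi_add addrC subrK. Qed.

End Powers.

Inductive tw_kind := Laurent | PosPart | NegPart.

(* which exponents i may carry a nonzero coefficient f_i *)
Definition allowed (k : tw_kind) (i : int) : bool :=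
  match k with Laurent => true | PosPart => 0 <= i | NegPart => i <= 0 end.

Definition irange (N : nat) : seq int :=
  [seq (m%:Z - N%:Z) | m <- iota 0 (N.*2.+1)].

Lemma mem_irange N i : i \in irange N -> (`|i| <= N)%N.
Proof. by case/mapP => m; rewrite mem_iota => /andP [_ hm] ->; lia. Qed.

Section Twisted.
Variables (C : precat_data) (P : autom_data C) (kd : tw_kind).

(* a morphism A -> B: a finite formal sum  sum_i f_i t^i,  f_i : Phi^i A -> B,
   represented by its family of coefficients (finitely many nonzero, and
   zero outside the allowed exponents) *)
Record thom (A B : Obj C) := THom {
  tfun : forall i : int, Hom (phi P i A) B;
  tfin : exists N : nat, forall i : int, (N < `|i|)%N -> tfun i = hzero;
  tsub : forall i : int, ~~ allowed kd i -> tfun i = hzero }.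

Definition tbnd A B (f : thom A B) : nat :=
  proj1_sig (constructive_indefinite_description _ (tfin f)).

Lemma tbndP A B (f : thom A B) i : (tbnd f < `|i|)%N -> tfun f i = hzero.
Proof. exact: (proj2_sig (constructive_indefinite_description _ (tfin f))). Qed.

(* composition: (g o f)_k = sum_{i+j=k} g_j o Phi^j(f_i); the sum is taken
   over the (finite) range of pairs where f_i and g_j may be nonzero *)
Definition tcomp_pred A B D (g : thom B D) (f : thom A B) (k : int) (i : int) : bool :=
  allowed kd i && allowed kd (k - i) && (`|k - i| <= tbnd g)%N.

Definition tcomp_fun A B D (g : thom B D) (f : thom A B) (k : int) :
  Hom (phi P k A) D :=
  \big[@hadd C _ _ / hzero]_(i <- irange (tbnd f) | tcomp_pred g f k i)
     castL (phi_comp P i k A) (comp (tfun g (k - i)) (phiM P (k - i) (tfun f i))).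

Lemma tcomp_fin A B D (g : thom B D) (f : thom A B) :
  exists N : nat, forall k : int, (N < `|k|)%N -> tcomp_fun g f k = hzero.
Proof.
exists (tbnd f + tbnd g)%N => k hk; apply: big_hasC; apply/hasPn => i /mem_irange hi.
rewrite /tcomp_pred; apply/negP => /andP [_ hki]; lia.
Qed.

Lemma allowed_sum i k : allowed kd i -> allowed kd (k - i) -> allowed kd k.
Proof. by case: kd => //= h1 h2; lia. Qed.

Lemma tcomp_sub A B D (g : thom B D) (f : thom A B) k :
  ~~ allowed kd k -> tcomp_fun g f k = hzero.
Proof.
move=> hk; apply: big_hasC; apply/hasPn => i _; rewrite /tcomp_pred.
apply/negP => /andP [/andP [h1 h2] _]; by rewrite (allowed_sum h1 h2) in hk.
Qed.

Definition tcomp A B D (g : thom B D) (f : thom A B) : thom A D :=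
  THom (tcomp_fin g f) (@tcomp_sub _ _ _ g f).

Definition tid_fun (A : Obj C) (i : int) : Hom (phi P i A) A :=
  match i as i0 return Hom (phi P i0 A) A with
  | Posz n => match n as n0 return Hom (phi P (Posz n0) A) A with
              | 0 => idm A | _.+1 => hzero end
  | Negz _ => hzero end.

Lemma tid_fin A : exists N : nat, forall i : int, (N < `|i|)%N -> tid_fun A i = hzero.
Proof. by exists 0%N => -[[|n]|n]. Qed.

Lemma tid_sub A i : ~~ allowed kd i -> tid_fun A i = hzero.
Proof. by case: i => [[|n]|n] //; case: kd. Qed.

Definition tid A : thom A A := THom (tid_fin A) (@tid_sub A).

(* zero, sum and opposite: coefficientwise (restricted to the support
   bounds and allowed exponents, outside of which the coefficients vanish) *)
Definition tzero A B : thom A B :=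
  @THom A B (fun _ => hzero) (ex_intro _ 0%N (fun _ _ => erefl)) (fun _ _ => erefl).

Definition tadd_fun A B (f g : thom A B) (i : int) : Hom (phi P i A) B :=
  if (`|i| <= maxn (tbnd f) (tbnd g))%N && allowed kd i
  then hadd (tfun f i) (tfun g i) else hzero.

Lemma tadd_fin A B (f g : thom A B) :
  exists N : nat, forall i : int, (N < `|i|)%N -> tadd_fun f g i = hzero.
Proof.
exists (maxn (tbnd f) (tbnd g)) => i hi; rewrite /tadd_fun.
by case: ifP => // /andP [h _]; move: h; rewrite leqNgt hi.
Qed.

Lemma tadd_sub A B (f g : thom A B) i : ~~ allowed kd i -> tadd_fun f g i = hzero.
Proof. by move=> h; rewrite /tadd_fun (negbTE h) andbF. Qed.

Definition tadd A B (f g : thom A B) : thom A B :=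
  THom (tadd_fin f g) (@tadd_sub A B f g).

Definition topp_fun A B (f : thom A B) (i : int) : Hom (phi P i A) B :=
  if (`|i| <= tbnd f)%N && allowed kd i then hopp (tfun f i) else hzero.

Lemma topp_fin A B (f : thom A B) :
  exists N : nat, forall i : int, (N < `|i|)%N -> topp_fun f i = hzero.
Proof.
exists (tbnd f) => i hi; rewrite /topp_fun.
by case: ifP => // /andP [h _]; move: h; rewrite leqNgt hi.
Qed.

Lemma topp_sub A B (f : thom A B) i : ~~ allowed kd i -> topp_fun f i = hzero.
Proof. by move=> h; rewrite /topp_fun (negbTE h) andbF. Qed.

Definition topp A B (f : thom A B) : thom A B :=
  THom (topp_fin f) (@topp_sub A B f).

Definition twisted : precat_data :=
  @PreCatData (Obj C) thom tcomp tid tadd tzero topp.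

End Twisted.

Definition laurent_cat (C : precat_data) (P : autom_data C) := twisted P Laurent.
Definition poly_cat (C : precat_data) (P : autom_data C) := twisted P PosPart.
Definition invpoly_cat (C : precat_data) (P : autom_data C) := twisted P NegPart.

Section Modules.
Variable C : precat_data.

(* data of a contravariant functor  C -> abelian groups *)
Record module := Module {
  mod_obj : Obj C -> abgroup;
  mod_act : forall X Y : Obj C, Hom X Y -> mod_obj Y -> mod_obj X }.
Arguments mod_act _ {X Y} _ _.

Definition is_module (M : module) : Prop :=
  [/\ forall (X Y : Obj C) (f : Hom X Y) (y1 y2 : mod_obj M Y),
        mod_act M f (ag_add y1 y2) = ag_add (mod_act M f y1) (mod_act M f y2),
      forall (X Y : Obj C) (f g : Hom X Y) (y : mod_obj M Y),
        mod_act M (hadd f g) y = ag_add (mod_act M f y) (mod_act M g y),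
      forall (X Y Z : Obj C) (g : Hom Y Z) (f : Hom X Y) (z : mod_obj M Z),
        mod_act M (comp g f) z = mod_act M f (mod_act M g z)
    & forall (X : Obj C) (x : mod_obj M X), mod_act M (idm X) x = x].

Definition is_submodule (M : module) (N : forall X : Obj C, mod_obj M X -> Prop) : Prop :=
  [/\ forall X, N X ag_zero,
      forall X (x y : mod_obj M X), N X x -> N X y -> N X (ag_add x y),
      forall X (x : mod_obj M X), N X x -> N X (ag_opp x)
    & forall (X Y : Obj C) (f : Hom X Y) (y : mod_obj M Y), N Y y -> N X (mod_act M f y)].

(* N (a submodule of M) is finitely generated: there are objects B_0..B_{n-1}
   and a natural transformation  eta : (+)_k mor(?, B_k) -> M  of
   ZC-modules whose image is exactly N, i.e. N is a quotient of a finite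
   direct sum of representables *)
Definition fg_sub (M : module) (N : forall X : Obj C, mod_obj M X -> Prop) : Prop :=
  exists (n : nat) (B : 'I_n -> Obj C)
         (eta : forall X : Obj C, (forall k : 'I_n, Hom X (B k)) -> mod_obj M X),
    [/\ forall X (fs gs : forall k : 'I_n, Hom X (B k)),
          eta X (fun k => hadd (fs k) (gs k)) = ag_add (eta X fs) (eta X gs),
        forall (X Y : Obj C) (h : Hom X Y) (fs : forall k : 'I_n, Hom Y (B k)),
          eta X (fun k => comp (fs k) h) = mod_act M h (eta Y fs)
      & forall X (x : mod_obj M X), N X x <-> exists fs, eta X fs = x].

Definition fg_module (M : module) : Prop := @fg_sub M (fun _ _ => True).

Definition noetherian : Prop :=
  forall M : module, is_module M -> fg_module M ->
  forall N, @is_submodule M N -> @fg_sub M N.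

End Modules.

(* Main.v *)
From HB Require Import structures.
From mathcomp Require Import all_boot all_algebra.
From mathcomp Require Import zify.
Require Import Defs.
From Stdlib Require Import ClassicalEpsilon FunctionalExtensionality ProofIrrelevance.
From Stdlib Require List.
Import GRing.Theory Num.Theory.
Local Open Scope ring_scope.
Set Implicit Arguments. Unset Strict Implicit. Unset Printing Implicit Defensive.

HB.instance Definition _ (A : abgroup) :=
  Monoid.isComLaw.Build (ag_car A) ag_zero (@ag_add A) (@ag_addA A) (@ag_addC A) (@ag_add0 A).

Section AG.
Variable A : abgroup.
Lemma ag_addr0 (x : A) : ag_add x ag_zero = x.
Proof. by rewrite ag_addC ag_add0. Qed.
Lemma ag_addNr (x : A) : ag_add (ag_opp x) x = ag_zero.
Proof. exact: ag_addN. Qed.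
Lemma ag_addrN (x : A) : ag_add x (ag_opp x) = ag_zero.
Proof. by rewrite ag_addC ag_addN. Qed.
Lemma ag_addKl (x y : A) : ag_add (ag_opp x) (ag_add x y) = y.
Proof. by rewrite ag_addA ag_addN ag_add0. Qed.
Lemma ag_cancel (x y z : A) : ag_add x y = ag_add x z -> y = z.
Proof. by move=> h; rewrite -(ag_addKl x y) h ag_addKl. Qed.
Lemma ag_idem0 (x : A) : ag_add x x = x -> x = ag_zero.
Proof. by move=> h; apply: (@ag_cancel x); rewrite h ag_addr0. Qed.
Lemma ag_opp_uniq (x y : A) : ag_add y x = ag_zero -> y = ag_opp x.
Proof. move=> h; apply: (@ag_cancel x); by rewrite ag_addC h ag_addrN. Qed.
Lemma ag_opp0 : ag_opp (@ag_zero A) = ag_zero.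
Proof. by symmetry; apply: ag_opp_uniq; rewrite ag_add0. Qed.
Lemma ag_oppD (x y : A) : ag_opp (ag_add x y) = ag_add (ag_opp x) (ag_opp y).
Proof.
symmetry; apply: ag_opp_uniq.
by rewrite [ag_add x y]ag_addC ag_addA -[ag_add (ag_add _ _) y]ag_addA ag_addN ag_addr0 ag_addN.
Qed.
Lemma ag_oppK (x : A) : ag_opp (ag_opp x) = x.
Proof. by symmetry; apply: ag_opp_uniq; rewrite ag_addrN. Qed.
Lemma ag_subK (x y : A) : ag_add (ag_add x (ag_opp y)) y = x.
Proof. by rewrite -ag_addA ag_addN ag_addr0. Qed.
End AG.

(* heterogeneous equality of morphisms *)
Section Pack.
Variable C : precat_data.
Definition pk (X Y : Obj C) (f : Hom X Y) : {p : Obj C * Obj C & Hom p.1 p.2} :=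
  existT (fun p : Obj C * Obj C => Hom p.1 p.2) (X, Y) f.

Lemma pk_inj X Y (f g : Hom X Y) : pk f = pk g -> f = g.
Proof. move=> h; exact: (ProofIrrelevanceTheory.EqdepTheory.inj_pair2 _ _ _ _ _ h). Qed.

Lemma pk_obj X Y X' Y' (f : Hom X Y) (g : Hom X' Y') : pk f = pk g -> X = X' /\ Y = Y'.
Proof. by move=> h; have := f_equal (@projT1 _ _) h => /= [[-> ->]]. Qed.

Lemma pk_castHom X X' Y Y' (e1 : X = X') (e2 : Y = Y') (f : Hom X Y) :
  pk (castHom e1 e2 f) = pk f.
Proof. by case: X' / e1; case: Y' / e2. Qed.

Lemma pk_castL X X' Y (e : X = X') (f : Hom X Y) : pk (castL e f) = pk f.
Proof. by case: X' / e. Qed.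

Lemma pk_comp X Y Z X' Y' Z' (g : Hom Y Z) (f : Hom X Y) (g' : Hom Y' Z') (f' : Hom X' Y') :
  pk g = pk g' -> pk f = pk f' -> pk (comp g f) = pk (comp g' f').
Proof.
move=> hg hf; case: (pk_obj hg) => e1 e2; case: (pk_obj hf) => e3 _.
subst; by rewrite (pk_inj hg) (pk_inj hf).
Qed.

Lemma pk_hadd X Y X' Y' (f g : Hom X Y) (f' g' : Hom X' Y') :
  pk f = pk f' -> pk g = pk g' -> pk (hadd f g) = pk (hadd f' g').
Proof.
move=> hf hg; case: (pk_obj hf) => e1 e2; subst; by rewrite (pk_inj hf) (pk_inj hg).
Qed.

Lemma pk_hopp X Y X' Y' (f : Hom X Y) (f' : Hom X' Y') :
  pk f = pk f' -> pk (hopp f) = pk (hopp f').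
Proof. move=> hf; case: (pk_obj hf) => e1 e2; subst; by rewrite (pk_inj hf). Qed.

Lemma pk_hzero X Y X' Y' : X = X' -> Y = Y' -> pk (@hzero C X Y) = pk (@hzero C X' Y').
Proof. by move=> -> ->. Qed.

Lemma pk_idm X X' : X = X' -> pk (idm X) = pk (idm X').
Proof. by move=> ->. Qed.

Lemma castL_hzero (X X' Y : Obj C) (e : X = X') : castL e (@hzero C X Y) = hzero.
Proof. by case: X' / e. Qed.

Lemma castL_hadd (X X' Y : Obj C) (e : X = X') (f g : Hom X Y) :
  castL e (hadd f g) = hadd (castL e f) (castL e g).
Proof. by case: X' / e. Qed.

Lemma castL_big (X X' Y : Obj C) (e : X = X') I (r : seq I) (Pr : pred I) (F : I -> Hom X Y) :
  castL e (\big[hadd/hzero]_(i <- r | Pr i) F i) = \big[hadd/hzero]_(i <- r | Pr i) castL e (F i).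
Proof. by case: X' / e. Qed.
End Pack.


Lemma irange_uniq N : uniq (irange N).
Proof.
rewrite map_inj_uniq ?iota_uniq // => m m' /= h; lia.
Qed.

Lemma mem_irange_ge N (i : int) : (`|i| <= N)%N -> i \in irange N.
Proof.
move=> h; apply/mapP; exists (absz (i + N%:Z)); last by lia.
rewrite mem_iota; apply/andP; split; lia.
Qed.



Definition homgroup (D : precat_data) : Prop :=
  forall X Y : Obj D,
        [/\ associative (@hadd D X Y), commutative (@hadd D X Y),
            left_id (@hzero D X Y) (@hadd D X Y)
          & left_inverse (@hzero D X Y) (@hopp D X Y) (@hadd D X Y)].

Section HomGroup.
Variable D : precat_data.
Hypothesis Dg : homgroup D.
Lemma hg_assoc (X Y : Obj D) : associative (@hadd D X Y).
Proof. by case: (Dg X Y). Qed.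
Lemma hg_comm (X Y : Obj D) : commutative (@hadd D X Y).
Proof. by case: (Dg X Y). Qed.
Lemma hg_add0 (X Y : Obj D) : left_id hzero (@hadd D X Y).
Proof. by case: (Dg X Y). Qed.
Lemma hg_addN (X Y : Obj D) : left_inverse hzero (@hopp D X Y) (@hadd D X Y).
Proof. by case: (Dg X Y). Qed.
Definition HG (X Y : Obj D) : abgroup :=
  @AbGroup (Hom X Y) hadd hzero hopp (@hg_assoc X Y) (@hg_comm X Y) (@hg_add0 X Y) (@hg_addN X Y).
End HomGroup.

Lemma preadd_homgroup C : preadditive C -> homgroup C.
Proof. by case. Qed.


Lemma In_nth_seq T (x0 : T) (s : seq T) i : (i < size s)%N -> List.In (nth x0 s i) s.
Proof.
elim: s i => [|a s IH] [|i] //= h; first by left.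
by right; apply: IH.
Qed.

Lemma In_nth_ex T (s : seq T) p : List.In p s -> exists i, (i < size s)%N /\ nth p s i = p.
Proof.
elim: s => [|a s IH] //= [<-|h]; first by exists 0%N.
by case: (IH h) => i [h1 h2]; exists i.+1.
Qed.

Lemma In_tnth T (s : seq T) (k : 'I_(size s)) : List.In (tnth (in_tuple s) k) s.
Proof. rewrite (tnth_nth (tnth (in_tuple s) k)); exact: In_nth_seq. Qed.

Lemma In_mem (T : eqType) (x : T) s : x \in s -> List.In x s.
Proof. elim: s => [|a s IH] //=; rewrite in_cons => /orP [/eqP ->|h]; [by left|right; auto]. Qed.

Lemma In_map_seq T U (f : T -> U) x s : List.In x s -> List.In (f x) (map f s).
Proof. elim: s => [|a s IH] //= [->|h]; [by left|right; auto]. Qed.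

Lemma In_map_inv T U (f : T -> U) y s : List.In y (map f s) -> exists x, y = f x.
Proof. elim: s => [|a s IH] //= [<-|h]; [by exists a|auto]. Qed.

Lemma In_map_inv2 T U (f : T -> U) y s : List.In y (map f s) -> exists x, List.In x s /\ y = f x.
Proof. elim: s => [|a s IH] //= [<-|h]; first by exists a; split; [left|].
by case: (IH h) => x [h1 h2]; exists x; split; [right|]. Qed.

Lemma mem_In (T : eqType) (x : T) s : List.In x s -> x \in s.
Proof. elim: s => [|a s IH] //= [->|h]; rewrite in_cons ?eqxx //; by rewrite IH ?orbT. Qed.

Lemma In_app_l T (x : T) s t : List.In x s -> List.In x (s ++ t).
Proof. elim: s => [|a s IH] //= [->|h]; [by left|right; auto]. Qed.
Lemma In_app_r T (x : T) s t : List.In x t -> List.In x (s ++ t).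
Proof. elim: s => [|a s IH] //= h; right; auto. Qed.
Lemma In_app_inv T (x : T) s t : List.In x (s ++ t) -> List.In x s \/ List.In x t.
Proof.
elim: s => [|a s IH] /=; first by right.
case=> [->|h]; first by left; left.
case: (IH h); auto.
Qed.

Lemma In_flatten_map T U (f : T -> seq U) s x y :
  List.In x s -> List.In y (f x) -> List.In y (flatten (map f s)).
Proof.
elim: s => [|a s IH] //= [->|h] hy; first exact: In_app_l.
by apply: In_app_r; apply: IH.
Qed.

Lemma In_flatten_inv T U (f : T -> seq U) s y :
  List.In y (flatten (map f s)) -> exists x, List.In x s /\ List.In y (f x).
Proof.
elim: s => [|a s IH] //= hy; case: (In_app_inv hy) => h; first by exists a; split; [left|].
by case: (IH h) => x [h1 h2]; exists x; split; [right|].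
Qed.

Section Mod.
Variable D : precat_data.
Hypothesis Dg : homgroup D.
Local Notation HGD := (HG Dg).

Section M1.
Variable M : module D.
Hypothesis Mm : is_module M.
Local Notation act := (@mod_act D M _ _).
Local Notation MO := (mod_obj M).

Lemma act_addr (X Y : Obj D) (f : Hom X Y) (y1 y2 : MO Y) :
  act f (ag_add y1 y2) = ag_add (act f y1) (act f y2).
Proof. by case: Mm. Qed.
Lemma act_addl (X Y : Obj D) (f g : Hom X Y) (y : MO Y) :
  act (hadd f g) y = ag_add (act f y) (act g y).
Proof. by case: Mm. Qed.
Lemma act_comp (X Y Z : Obj D) (g : Hom Y Z) (f : Hom X Y) (z : MO Z) :
  act (comp g f) z = act f (act g z).
Proof. by case: Mm. Qed.
Lemma act_id (X : Obj D) (x : MO X) : act (idm X) x = x.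
Proof. by case: Mm. Qed.
Lemma act_0r (X Y : Obj D) (f : Hom X Y) : act f ag_zero = ag_zero.
Proof. apply: ag_idem0; by rewrite -act_addr ag_add0. Qed.
Lemma act_0l (X Y : Obj D) (y : MO Y) : act (@hzero D X Y) y = ag_zero.
Proof. apply: ag_idem0; by rewrite -act_addl (hg_add0 Dg). Qed.
Lemma act_oppl (X Y : Obj D) (f : Hom X Y) (y : MO Y) : act (hopp f) y = ag_opp (act f y).
Proof. apply: ag_opp_uniq; by rewrite -act_addl (hg_addN Dg) act_0l. Qed.
Lemma act_oppr (X Y : Obj D) (f : Hom X Y) (y : MO Y) : act f (ag_opp y) = ag_opp (act f y).
Proof. apply: ag_opp_uniq; by rewrite -act_addr ag_addN act_0r. Qed.
Lemma act_bigr (X Y : Obj D) (f : Hom X Y) I (r : seq I) (F : I -> MO Y) :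
  act f (\big[ag_add/ag_zero]_(i <- r) F i) = \big[ag_add/ag_zero]_(i <- r) act f (F i).
Proof. apply: (big_morph (act f)); [exact: act_addr | exact: act_0r]. Qed.
Lemma ag_opp_big (A : abgroup) I (r : seq I) (F : I -> A) :
  ag_opp (\big[ag_add/ag_zero]_(i <- r) F i) = \big[ag_add/ag_zero]_(i <- r) ag_opp (F i).
Proof. apply: (big_morph ag_opp); [exact: ag_oppD | exact: ag_opp0]. Qed.

Inductive MSpan (G : seq {X : Obj D & MO X}) : forall X : Obj D, MO X -> Prop :=
| ms0 X : MSpan G (@ag_zero (MO X))
| msadd X (x y : MO X) : MSpan G x -> MSpan G y -> MSpan G (ag_add x y)
| msopp X (x : MO X) : MSpan G x -> MSpan G (ag_opp x)
| msgen p : List.In p G -> MSpan G (projT2 p)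
| msact X Y (f : Hom X Y) (y : MO Y) : MSpan G y -> MSpan G (act f y).

Lemma MSpan_mono G G' X (x : MO X) : (forall p, List.In p G -> List.In p G') ->
  MSpan G x -> MSpan G' x.
Proof. move=> h; elim => *; [exact: ms0|exact: msadd|exact: msopp|apply: msgen; auto|exact: msact]. Qed.

Lemma MSpan_sub (N : forall X, MO X -> Prop) G X (x : MO X) : is_submodule N ->
  (forall p, List.In p G -> N _ (projT2 p)) -> MSpan G x -> N X x.
Proof. case=> h0 ha ho hc hG; elim => *; auto. Qed.

Lemma MSpan_big G X I (r : seq I) (F : I -> MO X) : (forall i, MSpan G (F i)) ->
  MSpan G (\big[ag_add/ag_zero]_(i <- r) F i).
Proof.
move=> h; elim: r => [|a r IH]; first by rewrite big_nil; exact: ms0.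
by rewrite big_cons; apply: msadd.
Qed.

Lemma ag_addACA (A : abgroup) (a b c d : A) :
  ag_add (ag_add a b) (ag_add c d) = ag_add (ag_add a c) (ag_add b d).
Proof.
by rewrite -!ag_addA; congr ag_add; rewrite !ag_addA; congr ag_add; rewrite ag_addC.
Qed.

Section FgOfSpan.
Variable G : seq {X : Obj D & MO X}.
Local Notation n := (size G).
Local Notation gt k := (tnth (in_tuple G) k).
Definition gB (k : 'I_n) : Obj D := projT1 (gt k).
Definition gE (k : 'I_n) : MO (gB k) := projT2 (gt k).
Definition geta (X : Obj D) (fs : forall k : 'I_n, Hom X (gB k)) : MO X :=
  \big[ag_add/ag_zero]_(k < n) act (fs k) (gE k).

Definition deltaH (B : 'I_n -> Obj D) (i k : 'I_n) : Hom (B i) (B k) :=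
  match i =P k with
  | ReflectT e => match e in _ = k0 return Hom (B i) (B k0) with erefl => idm (B i) end
  | ReflectF _ => hzero end.

Lemma deltaH_eq B i : deltaH B i i = idm (B i).
Proof. rewrite /deltaH; case: eqP => // e; by rewrite (eq_irrelevance e erefl). Qed.
Lemma deltaH_ne B i k : i != k -> deltaH B i k = hzero.
Proof. rewrite /deltaH => h; case: eqP => // e; by rewrite e eqxx in h. Qed.

Lemma geta_add X (fs gs : forall k : 'I_n, Hom X (gB k)) :
  geta (fun k => hadd (fs k) (gs k)) = ag_add (geta fs) (geta gs).
Proof. rewrite /geta -big_split /=; apply: eq_bigr => k _; by rewrite act_addl. Qed.

Lemma geta_nat X Y (h : Hom X Y) (fs : forall k : 'I_n, Hom Y (gB k)) :
  geta (fun k => comp (fs k) h) = act h (geta fs).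
Proof. rewrite /geta act_bigr; apply: eq_bigr => k _; by rewrite act_comp. Qed.

Lemma geta_span X (x : MO X) : MSpan G x -> exists fs, geta fs = x.
Proof.
elim => {X x}.
- move=> X; exists (fun k => hzero); rewrite /geta big1 // => k _; exact: act_0l.
- move=> X x y _ [fs <-] _ [gs <-]; exists (fun k => hadd (fs k) (gs k)).
  by rewrite /geta -big_split /=; apply: eq_bigr => k _; rewrite act_addl.
- move=> X x _ [fs <-]; exists (fun k => hopp (fs k)).
  by rewrite /geta ag_opp_big; apply: eq_bigr => k _; rewrite act_oppl.
- move=> p hp; have [i [hi e]] := In_nth_ex hp.
  have e' : gt (Ordinal hi) = p by rewrite (tnth_nth p).
  case: p / e' {hp e}.
  exists (deltaH gB (Ordinal hi)); rewrite /geta (bigD1 (Ordinal hi)) //= deltaH_eq act_id.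
  rewrite big1 ?ag_addr0 // => k hk; rewrite deltaH_ne ?act_0l //; by rewrite eq_sym.
- move=> X Y f y _ [fs <-]; exists (fun k => comp (fs k) f).
  rewrite /geta act_bigr; apply: eq_bigr => k _; by rewrite act_comp.
Qed.

Lemma fg_of_span (N : forall X, MO X -> Prop) : is_submodule N ->
  (forall p, List.In p G -> N _ (projT2 p)) -> (forall X x, N X x -> MSpan G x) ->
  @fg_sub D M N.
Proof.
move=> hN hG hsp; exists n, gB, geta; split.
- move=> X fs gs; rewrite /geta -big_split /=; apply: eq_bigr => k _; by rewrite act_addl.
- move=> X Y h fs; rewrite /geta act_bigr; apply: eq_bigr => k _; by rewrite act_comp.
- move=> X x; split; first by move/hsp/geta_span.
  case=> fs <-; apply: (MSpan_sub hN hG); apply: MSpan_big => k; apply: msact.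
  exact: (msgen (In_tnth k)).
Qed.
End FgOfSpan.

Hypothesis Dl : forall (X Y : Obj D) (f : Hom X Y), comp (idm Y) f = f.
Hypothesis D0 : forall (X Y Z : Obj D) (f : Hom X Y), comp (@hzero D Y Z) f = hzero.

Lemma span_of_fg (N : forall X, MO X -> Prop) : @fg_sub D M N ->
  exists G : seq {X : Obj D & MO X},
    (forall p, List.In p G -> N _ (projT2 p)) /\ (forall X x, N X x -> MSpan G x).
Proof.
case=> n [B [eta [hadd_ hnat himg]]].
pose del (i k : 'I_n) : Hom (B i) (B k) :=
  match i =P k with
  | ReflectT e => match e in _ = k0 return Hom (B i) (B k0) with erefl => idm (B i) end
  | ReflectF _ => hzero end.
have del_eq i : del i i = idm (B i).
  rewrite /del; case: eqP => // e; by rewrite (eq_irrelevance e erefl).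
have del_ne i k : i != k -> del i k = hzero.
  rewrite /del => h; case: eqP => // e; by rewrite e eqxx in h.
pose G := [seq existT (fun X => MO X) (B k) (eta (B k) (del k)) | k <- enum 'I_n].
exists G; split.
- move=> p hp; case: (In_map_inv hp) => k e; subst p => /=; apply/himg; by exists (del k).
- move=> X x /himg [fs <-].
  have eta0 : eta X (fun k => hzero) = ag_zero.
    apply: ag_idem0; rewrite -hadd_; congr eta; apply: functional_extensionality_dep => k.
    exact: (hg_add0 Dg).
  have etaB (r : seq 'I_n) (F : 'I_n -> forall k : 'I_n, Hom X (B k)) :
      eta X (fun j => \big[@ag_add (HGD X (B j))/ag_zero]_(i <- r) F i j)
      = \big[ag_add/ag_zero]_(i <- r) eta X (F i).
    elim: r => [|a r IH]; first by rewrite big_nil -eta0; congr eta;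
      apply: functional_extensionality_dep => k; rewrite big_nil.
    rewrite big_cons -IH -hadd_; congr eta; apply: functional_extensionality_dep => k.
    by rewrite big_cons.
  have -> : fs = (fun j => \big[@ag_add (HGD X (B j))/ag_zero]_(i <- enum 'I_n) comp (del i j) (fs i)).
    apply: functional_extensionality_dep => j.
    rewrite big_enum (bigD1 j) // del_eq Dl big1; first exact: (esym (@ag_addr0 (HGD X (B j)) (fs j))).
    move=> i hi; by rewrite del_ne ?D0.
  rewrite etaB; apply: MSpan_big => i.
  rewrite (hnat _ _ (fs i) (del i)); apply: msact.
  exact: (msgen (In_map_seq (fun k => existT (fun X => MO X) (B k) (eta (B k) (del k)))
                  (In_mem (mem_enum _ i)))).
Qed.

End M1.
End Mod.

Section Ideal.
Variable D : precat_data.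

Definition is_ideal (B : Obj D) (J : forall X : Obj D, Hom X B -> Prop) : Prop :=
  [/\ forall X, J X hzero,
      forall X (f g : Hom X B), J X f -> J X g -> J X (hadd f g),
      forall X (f : Hom X B), J X f -> J X (hopp f)
    & forall X Y (h : Hom X Y) (f : Hom Y B), J Y f -> J X (comp f h)].

Inductive SpanD (B : Obj D) (Gs : seq {X : Obj D & Hom X B}) : forall X : Obj D, Hom X B -> Prop :=
| sd0 X : SpanD Gs (@hzero D X B)
| sdadd X (f g : Hom X B) : SpanD Gs f -> SpanD Gs g -> SpanD Gs (hadd f g)
| sdopp X (f : Hom X B) : SpanD Gs f -> SpanD Gs (hopp f)
| sdgen p : List.In p Gs -> SpanD Gs (projT2 p)
| sdcomp X Y (h : Hom X Y) (f : Hom Y B) : SpanD Gs f -> SpanD Gs (comp f h).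

Definition ideal_noeth : Prop :=
  forall (B : Obj D) (J : forall X : Obj D, Hom X B -> Prop), is_ideal J ->
  exists Gs : seq {X : Obj D & Hom X B},
    (forall p, List.In p Gs -> J _ (projT2 p)) /\ (forall X f, J X f -> SpanD Gs f).

Hypothesis Dg : homgroup D.

Section M2.
Variable M : module D.
Hypothesis Mm : is_module M.
Local Notation act := (@mod_act D M _ _).
Local Notation MO := (mod_obj M).

Lemma span_split (m : {X : Obj D & MO X}) ms X (x : MO X) : MSpan (m :: ms) x ->
  exists (f : Hom X (projT1 m)) (y : MO X), MSpan ms y /\ x = ag_add (act f (projT2 m)) y.
Proof.
elim => {X x}.
- move=> X; exists hzero, ag_zero; split; first exact: ms0.
  by rewrite act_0l // ag_add0.
- move=> X x y _ [f1 [y1 [h1 ->]]] _ [f2 [y2 [h2 ->]]].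
  exists (hadd f1 f2), (ag_add y1 y2); split; first exact: msadd.
  by rewrite act_addl // ag_addACA.
- move=> X x _ [f [y [h ->]]]; exists (hopp f), (ag_opp y); split; first exact: msopp.
  by rewrite act_oppl // ag_oppD.
- move=> p /= [<-|hp].
  + exists (idm _), ag_zero; split; first exact: ms0.
    by rewrite act_id // ag_addr0.
  + exists hzero, (projT2 p); split; first exact: msgen.
    by rewrite act_0l // ag_add0.
- move=> X Y h y _ [f [y' [hy ->]]]; exists (comp f h), (act h y'); split; first exact: msact.
  by rewrite act_addr // act_comp.
Qed.

Lemma list_choice (A B' : Type) (R : A -> B' -> Prop) (l : seq A) :
  (forall a, List.In a l -> exists b, R a b) ->
  exists l' : seq B', (forall b, List.In b l' -> exists a, List.In a l /\ R a b) /\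
                     (forall a, List.In a l -> exists b, List.In b l' /\ R a b).
Proof.
elim: l => [|a l IH] h; first by exists [::]; split.
have [b hb] := h a (or_introl erefl).
have [l' [h1 h2]] := IH (fun a' ha' => h a' (or_intror ha')).
exists (b :: l'); split.
- move=> b' /= [<-|hb']; first by exists a; split; [left|].
  by case: (h1 _ hb') => a' [? ?]; exists a'; split; [right|].
- move=> a' /= [<-|ha']; first by exists b; split; [left|].
  by case: (h2 _ ha') => b' [? ?]; exists b'; split; [right|].
Qed.

Hypothesis Hid : ideal_noeth.

Lemma noeth_span (ms : seq {X : Obj D & MO X}) (N : forall X, MO X -> Prop) :
  is_submodule N ->
  exists G, (forall p, List.In p G -> N _ (projT2 p)) /\
            (forall X (x : MO X), N X x -> MSpan ms x -> MSpan G x).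
Proof.
move=> hN; elim: ms => [|m ms IH]; first by exists [::]; split.
have [G2 [hG2 hsp2]] := IH.
case: (hN) => hN0 hNa hNo hNc.
pose J := fun X (f : Hom X (projT1 m)) => exists y : MO X, MSpan ms y /\ N X (ag_add (act f (projT2 m)) y).
have hJ : is_ideal J.
  split.
  - move=> X; exists ag_zero; split; first exact: ms0.
    by rewrite act_0l // ag_add0.
  - move=> X f g [y1 [h1 n1]] [y2 [h2 n2]]; exists (ag_add y1 y2); split; first exact: msadd.
    by rewrite act_addl // ag_addACA; apply: hNa.
  - move=> X f [y [h n]]; exists (ag_opp y); split; first exact: msopp.
    by rewrite act_oppl // -ag_oppD; apply: hNo.
  - move=> X Y h f [y [hy n]]; exists (act h y); split; first exact: msact.
    by rewrite act_comp // -act_addr //; apply: hNc.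
have [Gs [hGs hspD]] := Hid hJ.
have [G1 [hG1a hG1b]] := @list_choice _ _
  (fun (p : {X : Obj D & Hom X (projT1 m)}) (q : {X : Obj D & MO X}) => exists y : MO (projT1 p), MSpan ms y /\ N _ (ag_add (act (projT2 p) (projT2 m)) y) /\
     q = existT (fun X => MO X) (projT1 p) (ag_add (act (projT2 p) (projT2 m)) y)) Gs
  (fun p hp => let: ex_intro y (conj h1 h2) := hGs p hp in
     ex_intro _ _ (ex_intro _ y (conj h1 (conj h2 erefl)))).
have G1N : forall q, List.In q G1 -> N _ (projT2 q).
  move=> q hq; case: (hG1a q hq) => p [_ [y [_ [hn e]]]]; by subst q.
have key : forall X (f : Hom X (projT1 m)), SpanD Gs f ->
    exists z : MO X, MSpan G1 z /\ MSpan ms (ag_add z (ag_opp (act f (projT2 m)))).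
  move=> X f; elim => {X f}.
  - move=> X; exists ag_zero; split; first exact: ms0.
    by rewrite act_0l // ag_opp0 ag_add0; exact: ms0.
  - move=> X f g _ [z1 [h1 h1']] _ [z2 [h2 h2']]; exists (ag_add z1 z2); split; first exact: msadd.
    by rewrite act_addl // ag_oppD ag_addACA; apply: msadd.
  - move=> X f _ [z [hz hz']]; exists (ag_opp z); split; first exact: msopp.
    by rewrite act_oppl // -ag_oppD; apply: msopp.
  - move=> p hp; case: (hG1b p hp) => q [hq [y [hy [_ e]]]]; subst q.
    exists (ag_add (act (projT2 p) (projT2 m)) y); split; first exact: (msgen hq).
    by rewrite [ag_add (act _ _) y]ag_addC -ag_addA ag_addrN ag_addr0.
  - move=> X Y h f _ [z [hz hz']]; exists (act h z); split; first exact: msact.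
    by rewrite act_comp // -act_oppr // -act_addr //; apply: msact.
exists (G1 ++ G2); split.
- move=> q hq; case: (In_app_inv hq) => h; [exact: G1N | exact: hG2].
- move=> X x hx hxs; case: (span_split hxs) => f [y [hy ex]].
  have hf : J X f by exists y; rewrite -ex.
  have [z [hz hz']] := key _ _ (hspD _ _ hf).
  have zN : N X z by apply: (MSpan_sub hN G1N hz).
  have -> : x = ag_add z (ag_add x (ag_opp z)).
    by rewrite ag_addC ag_subK.
  apply: msadd; first exact: (MSpan_mono (fun q h => In_app_l G2 h) hz).
  apply: (MSpan_mono (fun q h => In_app_r G1 h)); apply: hsp2.
  + by apply: hNa => //; apply: hNo.
  + have -> : ag_add x (ag_opp z) = ag_add y (ag_opp (ag_add z (ag_opp (act f (projT2 m))))).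
      rewrite ex ag_oppD ag_oppK [ag_add (act _ _) y]ag_addC -!ag_addA; congr ag_add.
      by rewrite ag_addC.
    by apply: msadd => //; apply: msopp.
Qed.
End M2.

Hypothesis Dl : forall (X Y : Obj D) (f : Hom X Y), comp (idm Y) f = f.
Hypothesis D0 : forall (X Y Z : Obj D) (f : Hom X Y), comp (@hzero D Y Z) f = hzero.

Lemma noeth_of_ideal : ideal_noeth -> noetherian D.
Proof.
move=> Hid M Mm hfg N hN.
have [ms [_ hms]] := span_of_fg Dg Dl D0 hfg.
have [G [hG hsp]] := noeth_span Mm Hid ms hN.
apply: (fg_of_span Dg Mm hN hG) => X x hx; apply: hsp => //; exact: hms.
Qed.
End Ideal.
Section Cat.
Variable C : precat_data.
Hypothesis Cpa : preadditive C.
Let Cg := preadd_homgroup Cpa.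
HB.instance Definition _ (X Y : Obj C) :=
  Monoid.isComLaw.Build (Hom X Y) hzero (@hadd C X Y) (@hg_assoc _ Cg X Y) (@hg_comm _ Cg X Y) (@hg_add0 _ Cg X Y).
Lemma c_hadd0 (X Y : Obj C) (f : Hom X Y) : hadd hzero f = f.
Proof. exact: hg_add0. Qed.
Lemma c_haddr0 (X Y : Obj C) (f : Hom X Y) : hadd f hzero = f.
Proof. exact: (@ag_addr0 (HG Cg X Y)). Qed.
Lemma c_haddC (X Y : Obj C) (f g : Hom X Y) : hadd f g = hadd g f.
Proof. exact: hg_comm. Qed.
Lemma c_haddA (X Y : Obj C) (f g h : Hom X Y) : hadd f (hadd g h) = hadd (hadd f g) h.
Proof. exact: hg_assoc. Qed.
Lemma c_haddN (X Y : Obj C) (f : Hom X Y) : hadd (hopp f) f = hzero.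
Proof. exact: hg_addN. Qed.
Lemma c_hopp0 (X Y : Obj C) : hopp (@hzero C X Y) = hzero.
Proof. exact: (@ag_opp0 (HG Cg X Y)). Qed.
Lemma c_hadd00 (X Y : Obj C) : hadd (@hzero C X Y) hzero = hzero.
Proof. exact: c_hadd0. Qed.

Lemma c_compA (W X Y Z : Obj C) (h : Hom Y Z) (g : Hom X Y) (f : Hom W X) :
  comp h (comp g f) = comp (comp h g) f.
Proof. by case: Cpa => _ h' _ _ _; apply: h'. Qed.
Lemma c_comp1l (X Y : Obj C) (f : Hom X Y) : comp (idm Y) f = f.
Proof. by case: Cpa => _ _ h _ _; case: (h X Y f). Qed.
Lemma c_comp1r (X Y : Obj C) (f : Hom X Y) : comp f (idm X) = f.
Proof. by case: Cpa => _ _ h _ _; case: (h X Y f). Qed.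
Lemma c_compDl (X Y Z : Obj C) (g1 g2 : Hom Y Z) (f : Hom X Y) :
  comp (hadd g1 g2) f = hadd (comp g1 f) (comp g2 f).
Proof. by case: Cpa => _ _ _ h _; apply: h. Qed.
Lemma c_compDr (X Y Z : Obj C) (g : Hom Y Z) (f1 f2 : Hom X Y) :
  comp g (hadd f1 f2) = hadd (comp g f1) (comp g f2).
Proof. by case: Cpa => _ _ _ _ h; apply: h. Qed.
Lemma c_comp0l (X Y Z : Obj C) (f : Hom X Y) : comp (@hzero C Y Z) f = hzero.
Proof.
apply: (@ag_idem0 (HG Cg X Z)) => /=.
by rewrite -c_compDl c_hadd00.
Qed.
Lemma c_comp0r (X Y Z : Obj C) (g : Hom Y Z) : comp g (@hzero C X Y) = hzero.
Proof.
apply: (@ag_idem0 (HG Cg X Z)) => /=.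
by rewrite -c_compDr c_hadd00.
Qed.

Lemma c_big0 (X Y : Obj C) I (r : seq I) (Pr : pred I) :
  \big[hadd/hzero]_(i <- r | Pr i) (@hzero C X Y) = hzero.
Proof. by rewrite big1. Qed.

Lemma c_compBl (X Y Z : Obj C) I (r : seq I) (Pr : pred I) (F : I -> Hom Y Z) (f : Hom X Y) :
  comp (\big[hadd/hzero]_(i <- r | Pr i) F i) f = \big[hadd/hzero]_(i <- r | Pr i) comp (F i) f.
Proof.
apply: (big_morph (fun x => comp x f)); last exact: c_comp0l.
move=> x y; exact: c_compDl.
Qed.


Variable P : autom_data C.
Hypothesis Pa : is_automorphism P.

Lemma F1_comp (X Y Z : Obj C) (g : Hom Y Z) (f : Hom X Y) :
  F1 P (comp g f) = comp (F1 P g) (F1 P f).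
Proof. by case: Pa. Qed.
Lemma F1_idm (X : Obj C) : F1 P (idm X) = idm (F0 P X).
Proof. by case: Pa. Qed.
Lemma F1_hadd (X Y : Obj C) (f g : Hom X Y) : F1 P (hadd f g) = hadd (F1 P f) (F1 P g).
Proof. by case: Pa. Qed.
Lemma GF1 (X Y : Obj C) (f : Hom X Y) : castHom (GF P X) (GF P Y) (G1 P (F1 P f)) = f.
Proof. by case: Pa. Qed.
Lemma FG1 (X Y : Obj C) (f : Hom X Y) : castHom (FG P X) (FG P Y) (F1 P (G1 P f)) = f.
Proof. by case: Pa. Qed.

Lemma pk_F1 X Y X' Y' (f : Hom X Y) (f' : Hom X' Y') : pk f = pk f' -> pk (F1 P f) = pk (F1 P f').
Proof. move=> hf; case: (pk_obj hf) => e1 e2; subst; by rewrite (pk_inj hf). Qed.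
Lemma pk_G1 X Y X' Y' (f : Hom X Y) (f' : Hom X' Y') : pk f = pk f' -> pk (G1 P f) = pk (G1 P f').
Proof. move=> hf; case: (pk_obj hf) => e1 e2; subst; by rewrite (pk_inj hf). Qed.
Lemma pk_GF1 (X Y : Obj C) (f : Hom X Y) : pk (G1 P (F1 P f)) = pk f.
Proof. by rewrite -{2}(GF1 f) pk_castHom. Qed.
Lemma pk_FG1 (X Y : Obj C) (f : Hom X Y) : pk (F1 P (G1 P f)) = pk f.
Proof. by rewrite -{2}(FG1 f) pk_castHom. Qed.

Lemma F1_inj (X Y : Obj C) (f g : Hom X Y) : F1 P f = F1 P g -> f = g.
Proof. by move=> h; rewrite -(GF1 f) -(GF1 g) h. Qed.

Lemma F1_hzero (X Y : Obj C) : F1 P (@hzero C X Y) = hzero.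
Proof.
apply: (@ag_idem0 (HG Cg _ _)) => /=.
by rewrite -F1_hadd c_hadd00.
Qed.

Lemma G1_idm (X : Obj C) : G1 P (idm X) = idm (G0 P X).
Proof.
apply: F1_inj; apply: pk_inj; rewrite pk_FG1 F1_idm; apply: pk_idm.
by rewrite FG.
Qed.

Lemma G1_hzero (X Y : Obj C) : G1 P (@hzero C X Y) = hzero.
Proof.
apply: F1_inj; apply: pk_inj; rewrite pk_FG1 F1_hzero; apply: pk_hzero; by rewrite FG.
Qed.

Lemma F1_full (U V : Obj C) (a : Hom (F0 P U) (F0 P V)) : exists f : Hom U V, F1 P f = a.
Proof.
exists (castHom (GF P U) (GF P V) (G1 P a)); apply: pk_inj.
rewrite -(pk_FG1 a); apply: pk_F1; by rewrite pk_castHom.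
Qed.

Lemma G1_full (U V : Obj C) (a : Hom (G0 P U) (G0 P V)) : exists f : Hom U V, G1 P f = a.
Proof.
exists (castHom (FG P U) (FG P V) (F1 P a)); apply: pk_inj.
rewrite -(pk_GF1 a); apply: pk_G1; by rewrite pk_castHom.
Qed.

Lemma itF1_full n (X Y : Obj C) (a : Hom (iter n (F0 P) X) (iter n (F0 P) Y)) :
  exists f : Hom X Y, itF1 P n f = a.
Proof.
elim: n a => [|n IH] a; first by exists a.
have [f1 <-] := F1_full a; have [f <-] := IH f1; by exists f.
Qed.

Lemma itG1_full n (X Y : Obj C) (a : Hom (iter n (G0 P) X) (iter n (G0 P) Y)) :
  exists f : Hom X Y, itG1 P n f = a.
Proof.
elim: n a => [|n IH] a; first by exists a.
have [f1 <-] := G1_full a; have [f <-] := IH f1; by exists f.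
Qed.

Lemma phiM_full (j : int) (X Y : Obj C) (a : Hom (phi P j X) (phi P j Y)) :
  exists f : Hom X Y, phiM P j f = a.
Proof. case: j a => n a; [exact: itF1_full | exact: itG1_full]. Qed.

Lemma itF1_idm n (X : Obj C) : itF1 P n (idm X) = idm _.
Proof. by elim: n => [|n IH] //=; rewrite IH F1_idm. Qed.
Lemma itG1_idm n (X : Obj C) : itG1 P n (idm X) = idm _.
Proof. by elim: n => [|n IH] //=; rewrite IH G1_idm. Qed.
Lemma phiM_idm (j : int) (X : Obj C) : phiM P j (idm X) = idm (phi P j X).
Proof. case: j => n; [exact: (itF1_idm n X) | exact: (itG1_idm n.+1 X)]. Qed.

Lemma itF1_hzero n (X Y : Obj C) : itF1 P n (@hzero C X Y) = hzero.
Proof. by elim: n => [|n IH] //=; rewrite IH F1_hzero. Qed.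
Lemma itG1_hzero n (X Y : Obj C) : itG1 P n (@hzero C X Y) = hzero.
Proof. by elim: n => [|n IH] //=; rewrite IH G1_hzero. Qed.
Lemma phiM_hzero (j : int) (X Y : Obj C) : phiM P j (@hzero C X Y) = hzero.
Proof. case: j => n; [exact: (itF1_hzero n X Y) | exact: (itG1_hzero n.+1 X Y)]. Qed.

Lemma pk_phiM (j : int) X Y X' Y' (f : Hom X Y) (f' : Hom X' Y') :
  pk f = pk f' -> pk (phiM P j f) = pk (phiM P j f').
Proof. move=> hf; case: (pk_obj hf) => e1 e2; subst; by rewrite (pk_inj hf). Qed.

Lemma phi0 (X : Obj C) : phi P 0 X = X.
Proof. by []. Qed.

Lemma phi_inj (j : int) (X X' : Obj C) : phi P j X = phi P j X' -> X = X'.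
Proof.
move=> h; have e1 := phi_comp P j 0 X; have e2 := phi_comp P j 0 X'.
by rewrite -[X]e1 -[X']e2 h.
Qed.

Lemma phi_surj (j : int) (Y : Obj C) : phi P j (phi P (- j) Y) = Y.
Proof. have := phi_comp P (- j) 0 Y; by rewrite sub0r opprK. Qed.

Lemma phi_addE (i j : int) (X : Obj C) : phi P j (phi P i X) = phi P (i + j) X.
Proof. exact: phi_add. Qed.

Section Tw.
Variable kd : tw_kind.
Local Notation th := (thom P kd).

Lemma thom_ext (A B : Obj C) (f g : th A B) : (forall i, tfun f i = tfun g i) -> f = g.
Proof.
case: f => f1 f2 f3; case: g => g1 g2 g3 /= h.
have e : f1 = g1 by apply: functional_extensionality_dep.
subst; congr THom; apply: proof_irrelevance.
Qed.

Lemma tfun_tadd (A B : Obj C) (f g : th A B) i :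
  tfun (tadd f g) i = hadd (tfun f i) (tfun g i).
Proof.
rewrite /= /tadd_fun; case: ifP => // /negbT; rewrite negb_and => /orP [h|h].
- rewrite -ltnNge in h.
  rewrite !tbndP ?c_hadd00 //; apply: leq_ltn_trans h; by rewrite ?leq_maxl ?leq_maxr.
- by rewrite !(tsub _ h) c_hadd00.
Qed.

Lemma tfun_topp (A B : Obj C) (f : th A B) i : tfun (topp f) i = hopp (tfun f i).
Proof.
rewrite /= /topp_fun; case: ifP => // /negbT; rewrite negb_and => /orP [h|h].
- rewrite -ltnNge in h; by rewrite tbndP ?c_hopp0.
- by rewrite (tsub _ h) c_hopp0.
Qed.

Lemma tfun_tzero (A B : Obj C) i : tfun (@tzero C P kd A B) i = hzero.
Proof. by []. Qed.

Lemma tw_homgroup : homgroup (twisted P kd).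
Proof.
move=> X Y; split.
- move=> f g h; apply: thom_ext => i; by rewrite !tfun_tadd c_haddA.
- move=> f g; apply: thom_ext => i; by rewrite !tfun_tadd c_haddC.
- move=> f; apply: thom_ext => i; by rewrite !tfun_tadd tfun_tzero c_hadd0.
- move=> f; apply: thom_ext => i; by rewrite !tfun_tadd tfun_topp c_haddN.
Qed.

Lemma big_single (X Y : Obj C) (r : seq int) (Pr : pred int) (F : int -> Hom X Y) i0 :
  uniq r -> (forall i, i != i0 -> F i = hzero) ->
  \big[hadd/hzero]_(i <- r | Pr i) F i = if (i0 \in r) && Pr i0 then F i0 else hzero.
Proof.
move=> ur hF; rewrite big_mkcond; case hin: (i0 \in r).
- rewrite (bigD1_seq i0) //= big1 ?c_haddr0 //.
  move=> i hi; rewrite hF //; by case: (Pr i).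
- rewrite big1_seq // => i /andP [_ hi]; rewrite hF; first by case: (Pr i).
  by apply/eqP => e; rewrite e hin in hi.
Qed.

Arguments big_single {X Y} r Pr F i0.

Lemma tcomp_single_r (A B D : Obj C) (g : th B D) (f : th A B) (i0 : int) :
  (forall i, i != i0 -> tfun f i = hzero) -> forall k,
  tfun (tcomp g f) k =
    castL (phi_comp P i0 k A) (comp (tfun g (k - i0)) (phiM P (k - i0) (tfun f i0))).
Proof.
move=> hf k; rewrite /= /tcomp_fun (big_single _ _ _ i0 (irange_uniq _)); last first.
  by move=> i hi; rewrite hf // phiM_hzero // c_comp0r // castL_hzero.
case: ifP => // /negbT; rewrite negb_and => /orP [h|].
- have -> : tfun f i0 = hzero.
    by apply: tbndP; rewrite ltnNge; apply: contra h; apply: mem_irange_ge.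
  by rewrite phiM_hzero // c_comp0r // castL_hzero.
- rewrite /tcomp_pred !negb_and -orbA => /or3P [h|h|h].
  + by rewrite (tsub _ h) phiM_hzero // c_comp0r // castL_hzero.
  + by rewrite (tsub _ h) c_comp0l castL_hzero.
  + by rewrite -ltnNge in h; rewrite (tbndP h) c_comp0l castL_hzero.
Qed.

Lemma allowed0 : allowed kd 0.
Proof. by case: kd. Qed.

Lemma tid_ne (B : Obj C) (j : int) : j != 0 -> tfun (tid P kd B) j = hzero.
Proof. by case: j => [[|n]|n]. Qed.

Lemma tid_comp (A B : Obj C) (f : th A B) : tcomp (tid P kd B) f = f.
Proof.
apply: thom_ext => k.
rewrite /= /tcomp_fun (big_single _ _ _ k (irange_uniq _)); last first.
  move=> i hi; rewrite tid_ne ?c_comp0l ?castL_hzero //.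
  by apply: contra hi; rewrite subr_eq0 eq_sym.
have E : pk (castL (phi_comp P k k A)
            (comp (tid_fun P B (k - k)) (phiM P (k - k) (tfun f k)))) = pk (tfun f k).
  by rewrite pk_castL subrr /= c_comp1l.
case: ifP => [_|/negbT]; first exact: pk_inj.
rewrite negb_and => /orP [h|].
- by symmetry; apply: tbndP; rewrite ltnNge; apply: contra h; apply: mem_irange_ge.
- rewrite /tcomp_pred subrr allowed0 andbT /= leq0n andbT => h.
  by rewrite (tsub _ h).
Qed.

Lemma tzero_comp (A B D : Obj C) (f : th A B) : tcomp (@tzero C P kd B D) f = @tzero C P kd A D.
Proof.
apply: thom_ext => k; rewrite /= /tcomp_fun big1 // => i _.
by rewrite c_comp0l castL_hzero.
Qed.

Definition castI (A B : Obj C) (i j : int) (e : i = j) (c : Hom (phi P i A) B) :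
  Hom (phi P j A) B := match e in _ = j0 return Hom (phi P j0 A) B with erefl => c end.

Definition tsingle_fun (A B : Obj C) (i0 : int) (c : Hom (phi P i0 A) B) (i : int) :
  Hom (phi P i A) B :=
  match i0 =P i with ReflectT e => castI e c | ReflectF _ => hzero end.

Lemma tsingle_eq (A B : Obj C) (i0 : int) (c : Hom (phi P i0 A) B) :
  tsingle_fun c i0 = c.
Proof.
rewrite /tsingle_fun; case: eqP => // e; by rewrite (eq_irrelevance e erefl).
Qed.

Lemma tsingle_ne (A B : Obj C) (i0 : int) (c : Hom (phi P i0 A) B) i :
  i != i0 -> tsingle_fun c i = hzero.
Proof. rewrite /tsingle_fun => h; case: eqP => // e; by rewrite e eqxx in h. Qed.

Lemma tsingle_fin (A B : Obj C) (i0 : int) (c : Hom (phi P i0 A) B) :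
  exists N : nat, forall i : int, (N < `|i|)%N -> tsingle_fun c i = hzero.
Proof.
exists `|i0|%N => i hi; apply: tsingle_ne; apply/eqP => e; rewrite e in hi.
by rewrite ltnn in hi.
Qed.

Lemma tsingle_sub (A B : Obj C) (i0 : int) (c : Hom (phi P i0 A) B) (h0 : allowed kd i0) i :
  ~~ allowed kd i -> tsingle_fun c i = hzero.
Proof.
move=> h; apply: tsingle_ne; apply/eqP => e; by rewrite e h0 in h.
Qed.

Definition tsingle (A B : Obj C) (i0 : int) (c : Hom (phi P i0 A) B) (h0 : allowed kd i0) :
  th A B := THom (tsingle_fin c) (@tsingle_sub A B i0 c h0).

Lemma tsingleE (A B : Obj C) (i0 : int) (c : Hom (phi P i0 A) B) (h0 : allowed kd i0) :
  tfun (tsingle c h0) i0 = c.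
Proof. exact: tsingle_eq. Qed.

Lemma tsingleNE (A B : Obj C) (i0 : int) (c : Hom (phi P i0 A) B) (h0 : allowed kd i0) i :
  i != i0 -> tfun (tsingle c h0) i = hzero.
Proof. exact: tsingle_ne. Qed.

Lemma tcomp_tsingle (A B D : Obj C) (g : th B D) (i0 : int) (c : Hom (phi P i0 A) B)
  (h0 : allowed kd i0) k :
  pk (tfun (tcomp g (tsingle c h0)) k) = pk (comp (tfun g (k - i0)) (phiM P (k - i0) c)).
Proof.
rewrite (@tcomp_single_r _ _ _ _ _ i0); last exact: tsingleNE.
by rewrite pk_castL tsingleE.
Qed.

Lemma pk_tfun_idx (A B : Obj C) (f : th A B) (i j : int) :
  i = j -> pk (tfun f i) = pk (tfun f j).
Proof. by move=> ->. Qed.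


Definition repC (B : Obj C) : module C :=
  @Module C (fun X => HG Cg X B) (fun X Y (f : Hom X Y) (g : Hom Y B) => comp g f).

Lemma repC_module B : is_module (repC B).
Proof.
split.
- move=> X Y f y1 y2; exact: c_compDl.
- move=> X Y f g y; exact: c_compDr.
- move=> X Y Z g f z; exact: c_compA.
- move=> X x; exact: c_comp1r.
Qed.

Lemma repC_fg B : fg_module (repC B).
Proof.
exists 1%N, (fun _ => B), (fun X (fs : 'I_1 -> Hom X B) => fs ord0); split => //.
move=> X x; split => // _; by exists (fun _ => x).
Qed.

Lemma pk_zero (X Y X' Y' : Obj C) (x : Hom X Y) : pk x = pk (@hzero C X' Y') -> x = hzero.
Proof. move=> h; case: (pk_obj h) => e1 e2; subst; exact: pk_inj. Qed.

Lemma pk_sig (B Y Y' : Obj C) (a : Hom Y B) (a' : Hom Y' B) :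
  pk a = pk a' -> existT (fun Y => Hom Y B) Y a = existT (fun Y => Hom Y B) Y' a'.
Proof. move=> h; case: (pk_obj h) => e1 _; subst; by rewrite (pk_inj h). Qed.

Section Hilb.
Variable sg : int.
Hypothesis hsg : sg = 1 \/ sg = -1.
Hypothesis hall : forall i, allowed kd i = (0 <= sg * i).

Definition ex (n : nat) : int := sg * n%:Z.
Lemma ex_allowed n : allowed kd (ex n).
Proof. rewrite hall /ex; case: hsg => ->; lia. Qed.
Lemma ex_abs n : `|ex n|%N = n.
Proof. rewrite /ex; case: hsg => ->; lia. Qed.
Lemma ex_allowedE i : allowed kd i -> i = ex `|i|%N.
Proof. rewrite hall /ex; case: hsg => ->; lia. Qed.
Lemma exD a b : ex (a + b) = ex a + ex b.
Proof. rewrite /ex; case: hsg => ->; lia. Qed.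
Lemma exB a b : (b <= a)%N -> ex a - ex b = ex (a - b).
Proof. rewrite /ex; case: hsg => ->; lia. Qed.

Variable B : Obj C.
Variable J : forall X : Obj C, th X B -> Prop.
Arguments J : clear implicits.
Hypothesis hJ : @is_ideal (twisted P kd) B J.

Lemma J0 X : J X (@tzero C P kd X B).
Proof. by case: hJ. Qed.
Lemma Jadd X (f g : th X B) : J X f -> J X g -> J X (tadd f g).
Proof. by case: hJ => _ h _ _; apply: h. Qed.
Lemma Jopp X (f : th X B) : J X f -> J X (topp f).
Proof. by case: hJ => _ _ h _; apply: h. Qed.
Lemma Jcomp X Y (h : th X Y) (f : th Y B) : J Y f -> J X (tcomp f h).
Proof. by case: hJ => _ _ _ h'; apply: h'. Qed.

Definition deg_le X (f : th X B) (n : nat) : Prop :=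
  forall m : nat, (n < m)%N -> tfun f (ex m) = hzero.

Definition Ln (n : nat) (Y : Obj C) (a : Hom Y B) : Prop :=
  exists X (g : th X B), [/\ J X g, deg_le g n & pk (tfun g (ex n)) = pk a].
Arguments Ln : clear implicits.

Lemma shift_lemma (Xw X : Obj C) (gw : th Xw B) (j d : nat) : (j <= d)%N -> deg_le gw j ->
  forall b : Hom (phi P (ex d) X) (phi P (ex j) Xw),
  exists Hh : th X Xw, deg_le (tcomp gw Hh) d /\
     pk (tfun (tcomp gw Hh) (ex d)) = pk (comp (tfun gw (ex j)) b).
Proof.
move=> hjd hdw b.
pose k := (d - j)%N.
have eo : phi P (ex d) X = phi P (ex j) (phi P (ex k) X).
  by rewrite phi_addE -exD subnK.
have [c hc] := phiM_full (castL eo b).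
exists (tsingle c (ex_allowed k)); split.
- move=> m hm; apply: pk_zero.
  rewrite tcomp_tsingle (exB (_ : (k <= m)%N)); last by rewrite /k; lia.
  rewrite hdw; last by rewrite /k; lia.
  by rewrite c_comp0l.
- rewrite tcomp_tsingle exB /k; last by lia.
  have -> : (d - (d - j) = j)%N by lia.
  rewrite hc; apply: pk_comp => //; exact: pk_castL.
Qed.

Lemma Ln_sub n : is_submodule (M := repC B) (Ln n).
Proof.
split.
- move=> Y; exists (phi P (- ex n) Y), (@tzero C P kd _ B); split => //; first exact: J0.
  apply: pk_hzero => //; exact: phi_surj.
- move=> Y x y [X1 [g1 [j1 d1 p1]]] [X2 [g2 [j2 d2 p2]]].
  have e : X1 = X2 by apply: (phi_inj (j := ex n)); rewrite (pk_obj p1).1 (pk_obj p2).1.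
  subst X2; exists X1, (tadd g1 g2); split; first exact: Jadd.
  + by move=> m hm; rewrite tfun_tadd d1 // d2 // c_hadd00.
  + rewrite tfun_tadd; exact: pk_hadd.
- move=> Y x [X1 [g1 [j1 d1 p1]]]; exists X1, (topp g1); split; first exact: Jopp.
  + by move=> m hm; rewrite tfun_topp d1 // c_hopp0.
  + rewrite tfun_topp; exact: pk_hopp.
- move=> Y' Y h a [X [g [jg dg pg]]] /=.
  have eY := (pk_obj pg).1.
  have eY' := phi_surj (ex n) Y'.
  have [c hc] := phiM_full (castHom (esym eY') (esym eY) h).
  exists (phi P (- ex n) Y'), (tcomp g (tsingle (c : Hom (phi P 0 _) X) allowed0)); split.
  + exact: Jcomp.
  + move=> m hm; apply: pk_zero; rewrite tcomp_tsingle subr0 dg //; by rewrite c_comp0l.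
  + rewrite tcomp_tsingle subr0 hc; apply: pk_comp => //; exact: pk_castHom.
Qed.

Lemma Ln_S n Y a : Ln n Y a -> Ln n.+1 Y a.
Proof.
case=> X [g [jg dg pg]].
pose c : Hom (phi P (ex 1) (phi P (- ex 1) X)) X := castL (esym (phi_surj (ex 1) X)) (idm X).
exists (phi P (- ex 1) X), (tcomp g (tsingle c (ex_allowed 1))); split.
- exact: Jcomp.
- move=> m hm; apply: pk_zero; rewrite tcomp_tsingle exB; last by lia.
  by rewrite dg ?c_comp0l //; lia.
- rewrite tcomp_tsingle exB // subn1 /=.
  rewrite -pg -{2}(c_comp1r (tfun g (ex n))); apply: pk_comp => //.
  rewrite -phiM_idm; apply: pk_phiM; exact: pk_castL.
Qed.

Lemma Ln_mono n m Y a : (n <= m)%N -> Ln n Y a -> Ln m Y a.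
Proof.
move=> h; rewrite -(subnK h); elim: (m - n)%N => [|k IH] //= hL.
rewrite addSn; exact: Ln_S (IH hL).
Qed.

Definition LU (Y : Obj C) (a : Hom Y B) : Prop := exists n, Ln n Y a.
Arguments LU : clear implicits.

Lemma LU_sub : is_submodule (M := repC B) LU.
Proof.
have [h0 ha ho hc] := Ln_sub 0.
split.
- move=> Y; exists 0%N; exact: h0.
- move=> Y x y [n1 h1] [n2 h2]; exists (maxn n1 n2).
  case: (Ln_sub (maxn n1 n2)) => _ ha' _ _; apply: ha'.
  + exact: (Ln_mono (leq_maxl n1 n2) h1).
  + exact: (Ln_mono (leq_maxr n1 n2) h2).
- move=> Y x [n h]; exists n; by case: (Ln_sub n) => _ _ ho' _; apply: ho'.
- move=> X Y f y [n h]; exists n; by case: (Ln_sub n) => _ _ _ hc'; apply: hc'.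
Qed.

Hypothesis Cn : noetherian C.

Lemma acc : exists m, forall n Y a, Ln n Y a -> Ln m Y a.
Proof.
have hfg := Cn (repC_module B) (repC_fg B) LU_sub.
have [G [hG hsp]] := span_of_fg Cg c_comp1l c_comp0l hfg.
have [m hm] : exists m, forall p, List.In p G -> Ln m (projT1 p) (projT2 p).
  elim: G {hG hsp} (hG) => [|p G IH] hG; first by exists 0%N.
  have [m hm] := IH (fun q hq => hG q (or_intror hq)).
  have [n hn] := hG p (or_introl erefl).
  exists (maxn m n) => q /= [<-|hq].
  + exact: (Ln_mono (leq_maxr m n) hn).
  + exact: (Ln_mono (leq_maxl m n) (hm q hq)).
exists m => n Y a hL.
apply: (MSpan_sub (Ln_sub m) hm); apply: hsp; by exists n.
Qed.

Definition lead (j : nat) (w : {X : Obj C & th X B}) : {Y : Obj C & mod_obj (repC B) Y} :=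
  existT (fun Y => mod_obj (repC B) Y) (phi P (ex j) (projT1 w)) (tfun (projT2 w) (ex j)).

Lemma wit j : exists W : seq {X : Obj C & th X B},
  (forall w, List.In w W -> J _ (projT2 w) /\ deg_le (projT2 w) j) /\
  (forall Y a, Ln j Y a -> MSpan (M := repC B) (map (lead j) W) a).
Proof.
have hfg := Cn (repC_module B) (repC_fg B) (Ln_sub j).
have [G [hG hsp]] := span_of_fg Cg c_comp1l c_comp0l hfg.
have [W [hW1 hW2]] := @list_choice _ _
  (fun p (w : {X : Obj C & th X B}) => [/\ J _ (projT2 w), deg_le (projT2 w) j & lead j w = p]) G
  (fun p hp => let: ex_intro X (ex_intro g (And3 h1 h2 h3)) := hG p hp in
     ex_intro _ (existT _ X g) (And3 h1 h2 (eq_trans (pk_sig h3) (esym (sigT_eta p))))).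
exists W; split.
- move=> w hw; case: (hW1 w hw) => p [_ [h1 h2 _]]; by split.
- move=> Y a hL; apply: (MSpan_mono _ (hsp _ _ hL)) => p hp.
  case: (hW2 p hp) => w [hw [_ _ <-]]; exact: In_map_seq.
Qed.

Lemma hilbert : exists Gs : seq {X : Obj C & th X B},
    (forall p, List.In p Gs -> J _ (projT2 p)) /\ (forall X f, J X f -> SpanD (D := twisted P kd) Gs f).
Proof.
have [m hm] := acc.
pose W j := proj1_sig (constructive_indefinite_description _ (wit j)).
have hW j : (forall w, List.In w (W j) -> J _ (projT2 w) /\ deg_le (projT2 w) j) /\
  (forall Y a, Ln j Y a -> MSpan (M := repC B) (map (lead j) (W j)) a).
  exact: (proj2_sig (constructive_indefinite_description _ (wit j))).
pose Gall := flatten (map W (iota 0 m.+1)).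
have inG j w : (j <= m)%N -> List.In w (W j) -> List.In w Gall.
  move=> hj hw; apply: (In_flatten_map (x := j)) => //; apply: In_mem.
  by rewrite mem_iota; lia.
have lift : forall j d, (j <= d)%N -> (j <= m)%N -> forall Y (a : mod_obj (repC B) Y),
    MSpan (map (lead j) (W j)) a -> forall X, phi P (ex d) X = Y ->
    exists s : th X B, [/\ SpanD (D := twisted P kd) Gall s, J X s, deg_le s d & pk (tfun s (ex d)) = pk a].
  move=> j d hjd hjm Y a; elim => {Y a}.
  - move=> Y X eX; exists (@tzero C P kd X B); split.
    + exact: (@sd0 (twisted P kd) B Gall X).
    + exact: J0.
    + by [].
    + by apply: pk_hzero.
  - move=> Y x y _ IHx _ IHy X eX.
    have [s1 [h1 h2 h3 h4]] := IHx X eX; have [s2 [h1' h2' h3' h4']] := IHy X eX.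
    exists (tadd s1 s2); split.
    + exact: (@sdadd (twisted P kd) B Gall X s1 s2).
    + exact: Jadd.
    + by move=> n hn; rewrite tfun_tadd h3 // h3' // c_hadd00.
    + rewrite tfun_tadd; exact: pk_hadd.
  - move=> Y x _ IHx X eX.
    have [s1 [h1 h2 h3 h4]] := IHx X eX.
    exists (topp s1); split.
    + exact: (@sdopp (twisted P kd) B Gall X s1).
    + exact: Jopp.
    + by move=> n hn; rewrite tfun_topp h3 // c_hopp0.
    + rewrite tfun_topp; exact: pk_hopp.
  - move=> p hp X eX.
    have [w [hw ep]] := In_map_inv2 hp; clear hp; move: X eX; rewrite ep => X eX {ep}.
    case: w hw eX => Xw gw hw /= eX.
    have [hJw hdw] := (hW j).1 _ hw.
    have [Hh [hdeg hpk]] := shift_lemma hjd hdw (castL (esym eX) (idm _)).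
    exists (tcomp gw Hh); split.
    + apply: (@sdcomp (twisted P kd) B Gall X Xw Hh gw).
      exact: (@sdgen (twisted P kd) B Gall (existT _ Xw gw) (inG _ _ hjm hw)).
    + exact: Jcomp.
    + exact: hdeg.
    + rewrite hpk; transitivity (pk (comp (tfun gw (ex j)) (idm _))).
        by apply: pk_comp => //; exact: pk_castL.
      by rewrite c_comp1r.
  - move=> Y' Y f y _ IH X eX.
    have [s0 [h1 h2 h3 h4]] := IH _ (phi_surj (ex d) Y).
    have [Hh [hdeg hpk]] := shift_lemma (leqnn d) h3
         (castHom (esym eX) (esym (phi_surj (ex d) Y)) f).
    exists (tcomp s0 Hh); split.
    + exact: (@sdcomp (twisted P kd) B Gall _ _ Hh s0).
    + exact: Jcomp.
    + exact: hdeg.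
    + rewrite hpk /=; apply: pk_comp => //; exact: pk_castHom.
have main : forall d X (f : th X B), J X f ->
    (forall n, (d <= n)%N -> tfun f (ex n) = hzero) -> SpanD (D := twisted P kd) Gall f.
  elim=> [|d IH] X f hf hd.
  - have -> : f = @tzero C P kd X B.
      apply: thom_ext => i; case: (boolP (allowed kd i)) => h.
      + by rewrite (ex_allowedE h) hd.
      + exact: tsub.
    exact: (@sd0 (twisted P kd) B Gall X).
  - have La : Ln d (phi P (ex d) X) (tfun f (ex d)).
      exists X, f; split => // n hn; exact: hd.
    have Lj : Ln (minn d m) (phi P (ex d) X) (tfun f (ex d)).
      case: (leqP d m) => h; [exact: La | exact: hm La].
    have [s [sS sJ sdeg spk]] := lift (minn d m) d (geq_minl _ _) (geq_minr _ _) _ _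
       ((hW _).2 _ _ Lj) X erefl.
    have es : tfun s (ex d) = tfun f (ex d) by apply: pk_inj.
    have -> : f = tadd (tadd f (topp s)) s.
      apply: thom_ext => i; rewrite !tfun_tadd tfun_topp.
      exact: (esym (@ag_subK (HG Cg _ _) _ _)).
    apply: (@sdadd (twisted P kd) B Gall X); last exact: sS.
    apply: IH; first by apply: Jadd => //; apply: Jopp.
    move=> n hn; rewrite tfun_tadd tfun_topp.
    case: (ltngtP d n) => h'.
    + by rewrite hd // sdeg // c_hopp0 c_hadd00.
    + by lia.
    + subst n; rewrite es; exact: (@ag_addrN (HG Cg _ _)).
exists Gall; split.
- move=> p hp; case: (In_flatten_inv hp) => j [hj hw].
  exact: ((hW j).1 _ hw).1.
- move=> X f hf; apply: (main (tbnd f).+1) => // n hn.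
  by apply: tbndP; rewrite ex_abs.
Qed.

End Hilb.
End Tw.

Lemma noeth_tw (kd : tw_kind) (sg : int) : sg = 1 \/ sg = -1 ->
  (forall i, allowed kd i = (0 <= sg * i)) -> noetherian C -> noetherian (twisted P kd).
Proof.
move=> hsg hall Cn.
refine (@noeth_of_ideal (twisted P kd) (@tw_homgroup kd) _ _ _).
- move=> X Y f; exact: tid_comp.
- move=> X Y Z f; exact: tzero_comp.
- move=> B J hJ; exact: (hilbert hsg hall hJ Cn).
Qed.

Section Laur.
Local Notation thL := (thom P Laurent).
Local Notation thP := (thom P PosPart).

Definition incl (A B : Obj C) (f : thP A B) : thL A B :=
  @THom C P Laurent A B (tfun f) (tfin f) (fun i (h : ~~ allowed Laurent i) => False_ind _ (notF h)).

Lemma incl_tadd (A B : Obj C) (f g : thP A B) : incl (tadd f g) = tadd (incl f) (incl g).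
Proof. apply: thom_ext => i; rewrite [RHS]tfun_tadd; exact: (tfun_tadd f g i). Qed.

Lemma incl_tid (A : Obj C) : incl (tid P PosPart A) = tid P Laurent A.
Proof. by apply: thom_ext. Qed.

Lemma incl_tcomp (A B D : Obj C) (g : thP B D) (f : thP A B) :
  incl (tcomp g f) = tcomp (incl g) (incl f).
Proof.
apply: thom_ext => k /=; rewrite /tcomp_fun big_mkcond [in RHS]big_mkcond.
apply: eq_bigr => i _; rewrite /tcomp_pred /=.
case: (boolP (0 <= i)) => hi; case: (boolP (0 <= k - i)) => hki //=.
- by rewrite (tsub g (i := k - i)) ?hki // c_comp0l castL_hzero; case: ifP.
- by rewrite (tsub f (i := i)) ?hi // phiM_hzero // c_comp0r // castL_hzero; case: ifP.
- by rewrite (tsub f (i := i)) ?hi // phiM_hzero // c_comp0r // castL_hzero; case: ifP.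
Qed.

Section SubAG.
Variables (A : abgroup) (Q : A -> Prop).
Hypotheses (q0 : Q ag_zero) (qadd : forall x y, Q x -> Q y -> Q (ag_add x y))
  (qopp : forall x, Q x -> Q (ag_opp x)).
Local Notation S := {x : A | Q x}.
Lemma sval_inj (x y : S) : proj1_sig x = proj1_sig y -> x = y.
Proof. case: x => x hx; case: y => y hy /= e; subst; congr exist; exact: proof_irrelevance. Qed.
Definition sadd (x y : S) : S := exist _ (ag_add (proj1_sig x) (proj1_sig y)) (qadd (proj2_sig x) (proj2_sig y)).
Definition sopp (x : S) : S := exist _ (ag_opp (proj1_sig x)) (qopp (proj2_sig x)).
Definition szero : S := exist _ ag_zero q0.
Lemma saddA : associative sadd.
Proof. move=> x y z; apply: sval_inj => /=; exact: ag_addA. Qed.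
Lemma saddC : commutative sadd.
Proof. move=> x y; apply: sval_inj => /=; exact: ag_addC. Qed.
Lemma sadd0 : left_id szero sadd.
Proof. move=> x; apply: sval_inj => /=; exact: ag_add0. Qed.
Lemma saddN : left_inverse szero sopp sadd.
Proof. move=> x; apply: sval_inj => /=; exact: ag_addN. Qed.
Definition subAG : abgroup := @AbGroup S sadd szero sopp saddA saddC sadd0 saddN.
End SubAG.

Hypothesis Pn : noetherian (twisted P PosPart).

Lemma laurent_noeth : noetherian (twisted P Laurent).
Proof.
move=> M Mm hfg N hN.
have DgL := @tw_homgroup Laurent; have DgP := @tw_homgroup PosPart.
have [ms [_ hms]] := span_of_fg DgL (fun X Y f => @tid_comp Laurent X Y f) (fun X Y Z f => @tzero_comp Laurent X Y Z f) hfg.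
(* restriction of M to the polynomial category *)
pose Mres := @Module (twisted P PosPart) (mod_obj M)
   (fun X Y (f : thP X Y) (y : mod_obj M Y) => @mod_act (twisted P Laurent) M _ _ (incl f) y).
have Mresm : is_module Mres.
  case: Mm => m1 m2 m3 m4; split.
  - move=> X Y f y1 y2; exact: m1.
  - move=> X Y f g y; rewrite /= incl_tadd; exact: m2.
  - move=> X Y Z g f z; rewrite /= incl_tcomp; exact: m3.
  - move=> X x; rewrite /= incl_tid; exact: m4.
pose PS := fun X (x : mod_obj M X) => MSpan (M := Mres) ms x.
have PS0 X : PS X ag_zero by exact: ms0.
have PSa X (x y : mod_obj M X) : PS X x -> PS X y -> PS X (ag_add x y) by exact: msadd.
have PSo X (x : mod_obj M X) : PS X x -> PS X (ag_opp x) by exact: msopp.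
pose M'o := fun X => subAG (PS0 X) (@PSa X) (@PSo X).
have PSact X Y (f : thP X Y) (y : M'o Y) : PS X (@mod_act (twisted P Laurent) M _ _ (incl f) (proj1_sig y)).
  exact: (msact (M := Mres) f (proj2_sig y)).
pose M' := @Module (twisted P PosPart) M'o
   (fun X Y (f : thP X Y) (y : M'o Y) => exist _ (@mod_act (twisted P Laurent) M _ _ (incl f) (proj1_sig y)) (PSact X Y f y) : M'o X).
have M'm : is_module M'.
  case: Mresm => m1 m2 m3 m4; split.
  - move=> X Y f y1 y2; apply: sval_inj => /=; exact: m1.
  - move=> X Y f g y; apply: sval_inj => /=; exact: m2.
  - move=> X Y Z g f z; apply: sval_inj => /=; exact: m3.
  - move=> X x; apply: sval_inj => /=; exact: m4.
have M'fg : fg_module M'.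
  pose eta := fun X (fs : forall k : 'I_(size ms), thP X (gB k)) =>
     exist _ (geta (M := Mres) fs)
       (MSpan_big _ (fun k => msact (M := Mres) (fs k) (msgen (M := Mres) (In_tnth k)))) : M'o X.
  exists (size ms), (gB (M := Mres) (G := ms)), eta; split.
  - move=> X fs gs; apply: sval_inj; exact: (geta_add Mresm).
  - move=> X Y h fs; apply: sval_inj; exact: (geta_nat Mresm).
  - move=> X x; split => // _.
    have [fs efs] := geta_span DgP Mresm (proj2_sig x).
    exists fs; apply: sval_inj; exact: efs.
pose N' := fun X (x : M'o X) => N X (proj1_sig x).
have N'sub : is_submodule (M := M') N'.
  case: hN => n0 na no nc; split.
  - move=> X; exact: n0.
  - move=> X x y; exact: na.
  - move=> X x; exact: no.
  - move=> X Y f y; exact: nc.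
have [G' [hG'1 hG'2]] := span_of_fg DgP (fun X Y f => @tid_comp PosPart X Y f) (fun X Y Z f => @tzero_comp PosPart X Y Z f)
   (Pn M'm M'fg N'sub).
pose Gv := map (fun q : {X : Obj C & M'o X} => existT (fun X => mod_obj M X) (projT1 q) (proj1_sig (projT2 q))) G'.
have Gvspan : forall X (x : M'o X), MSpan (M := M') G' x -> MSpan (M := M) Gv (proj1_sig x).
  move=> X x; elim => {X x}.
  - move=> X; exact: ms0.
  - move=> X x y _ h1 _ h2; exact: msadd.
  - move=> X x _ h; exact: msopp.
  - move=> p hp; exact: (msgen (M := M) (In_map_seq _ hp)).
  - move=> X Y f y _ h; exact: msact.
apply: (fg_of_span DgL Mm hN (G := Gv)).
- move=> p hp; case: (In_map_inv2 hp) => q [hq ->]; exact: hG'1.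
- move=> X x hx.
  have [fs efs] := geta_span DgL Mm (hms X x I).
  pose N0 : nat := \max_(k < size ms) tbnd (fs k).
  pose X' := phi P (- N0%:Z) X.
  pose T : thL X' X := tsingle (kd := Laurent) (i0 := N0%:Z) (castL (esym (phi_surj N0%:Z X)) (@idm C X)) isT.
  pose S : thL X X' := tsingle (kd := Laurent) (i0 := - N0%:Z) (@idm C X') isT.
  have TS : tcomp T S = tid P Laurent X.
    apply: thom_ext => k; apply: pk_inj.
    rewrite tcomp_tsingle phiM_idm c_comp1r.
    case: (eqVneq k 0) => [->|hk].
    + have e0 : 0 - - N0%:Z = N0%:Z by rewrite sub0r opprK.
      rewrite (pk_tfun_idx _ e0).
      by rewrite /T tsingleE pk_castL.
    + rewrite /T tsingleNE; last by rewrite opprK -subr_eq0 addrK.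
      rewrite tid_ne //; apply: pk_hzero => //.
      rewrite phi_addE; congr phi; lia.
  have polyk : forall k : 'I_(size ms), exists p : thP X' (gB (M := M) (G := ms) k),
      incl p = tcomp (fs k) T.
    move=> k.
    have sub : forall i, ~~ allowed PosPart i -> tfun (tcomp (fs k) T) i = hzero.
      move=> i /= hi; apply: pk_zero; rewrite tcomp_tsingle tbndP ?c_comp0l //.
      have : (tbnd (fs k) <= N0)%N by exact: (leq_bigmax_cond (F := fun k => tbnd (fs k)) k).
      lia.
    by exists (THom (tfin (tcomp (fs k) T)) sub); apply: thom_ext.
  pose pp := fun k => proj1_sig (constructive_indefinite_description _ (polyk k)).
  have epp : forall k, incl (pp k) = tcomp (fs k) T.
    move=> k; exact: (proj2_sig (constructive_indefinite_description _ (polyk k))).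
  have ex' : @mod_act (twisted P Laurent) M _ _ T x = geta (M := Mres) pp.
    rewrite -efs /geta (act_bigr (M := M) Mm); apply: eq_bigr => k _ /=.
    by rewrite epp; case: Mm => _ _ m3 _; rewrite m3.
  have PSx : PS X' (@mod_act (twisted P Laurent) M _ _ T x).
    rewrite ex'; apply: MSpan_big => k; apply: msact; exact: (msgen (In_tnth k)).
  pose x'' : M'o X' := exist _ (@mod_act (twisted P Laurent) M _ _ T x) PSx.
  have Nx : N' X' x'' by case: hN => _ _ _ nc; apply: nc.
  have := Gvspan _ _ (hG'2 _ _ Nx) => /= hsp.
  have -> : x = @mod_act (twisted P Laurent) M _ _ S (@mod_act (twisted P Laurent) M _ _ T x).
    case: Mm => _ _ m3 m4; rewrite -m3.
    have -> : @comp (twisted P Laurent) _ _ _ T S = @idm (twisted P Laurent) X by exact: TS.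
    by rewrite m4.
  exact: msact.
Qed.
End Laur.
End Cat.

Theorem mainTheorem14 (C : precat_data) (P : autom_data C) :
  additive_cat C -> is_automorphism P ->
  (noetherian C ->
     [/\ noetherian (poly_cat P), noetherian (invpoly_cat P) & noetherian (laurent_cat P)]) /\
  (noetherian (poly_cat P) -> noetherian (laurent_cat P)).
Proof.
case=> Cpa _ _ Pa.
have hpoly : noetherian C -> noetherian (poly_cat P).
  move=> Cn; refine (@noeth_tw C Cpa P Pa PosPart 1 (or_introl erefl) _ Cn).
  move=> i /=; by rewrite mul1r.
have hinv : noetherian C -> noetherian (invpoly_cat P).
  move=> Cn; refine (@noeth_tw C Cpa P Pa NegPart (-1) (or_intror erefl) _ Cn).
  move=> i /=; by rewrite mulN1r oppr_ge0.
have hl : noetherian (poly_cat P) -> noetherian (laurent_cat P) := @laurent_noeth C Cpa P Pa.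
split; last exact: hl.
move=> Cn; split; [exact: hpoly Cn | exact: hinv Cn | exact: hl (hpoly Cn)].
Qed.
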